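(* Let $T\in\mathcal{BC}(X)$, $s\in\rho_S(T)$, and for $m\ge1$ set $$\mathcal M_m^L(s,T):=\sum_{i=0}^{m-1}\bar T^iS_L^{-1}(s,T)s^{m-i-1},\qquad \mathcal M_m^R(s,T):=\sum_{i=0}^{m-1}s^{m-i-1}S_R^{-1}(s,T)\bar T^i.$$ Then for every $m\ge1$, $$\mathcal Q_{c,s}(T)^{-1}s^m-\bar T^m\mathcal Q_{c,s}(T)^{-1}=\mathcal M_m^L(s,T)\quad\text{and}\quad s^m\mathcal Q_{c,s}(T)^{-1}-\mathcal Q_{c,s}(T)^{-1}\bar T^m=\mathcal M_m^R(s,T).$$
   Context: $\mathbb H$ denotes the quaternions with units $e_1,e_2,e_3$. $X=X_{\mathbb R}\otimes\mathbb H$ is a two-sided quaternionic Banach module over a real Banach space $X_{\mathbb R}$; $\mathcal{BC}(X)$ is the set of $T=T_0+T_1e_1+T_2e_2+T_3e_3$ with $T_i\in\mathcal B(X_{\mathbb R})$ pairwise commuting; $\bar T=T_0-\sum_{i=1}^3T_ie_i$; $\mathcal Q_{c,s}(T)=s^2\mathcal I-s(T+\bar T)+T\bar T$. $\rho_S(T)$ is the set of $s\in\mathbb H$ for which $\mathcal Q_{c,s}(T)$ has a bounded inverse. The (commutative) $S$-resolvent operators are $S_L^{-1}(s,T)=(s\mathcal I-\bar T)\mathcal Q_{c,s}(T)^{-1}$ and $S_R^{-1}(s,T)=\mathcal Q_{c,s}(T)^{-1}(s\mathcal I-\bar T)$. *)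

(* Defs.v *)
From HB Require Import structures.
From mathcomp Require Import all_boot all_order all_algebra.
From mathcomp Require Import all_classical all_reals topology normedtype.
Set Implicit Arguments. Unset Strict Implicit. Unset Printing Implicit Defensive.
Import Order.TTheory GRing.Theory Num.Theory.
Local Open Scope ring_scope.

Record quat (R : Type) := Quat { q0 : R; q1 : R; q2 : R; q3 : R }.

Record qop (R : realType) (V : normedModType R) := QOp {
  op0 : {linear V -> V}; op1 : {linear V -> V};
  op2 : {linear V -> V}; op3 : {linear V -> V} }.

Section QuaternionicOperators.
Variables (R : realType) (V : normedModType R).

(* X = X_R (x) H, an element x = x0 + x1 e1 + x2 e2 + x3 e3 (x_j in X_R)
   is represented by the 4-tuple (x0, x1, x2, x3). *)
Definition X := (V * V * V * V)%type.

(* left multiplication by the imaginary units *)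
Definition mulE1 (x : X) : X := let: (a, b, c, d) := x in (- b, a, - d, c).
Definition mulE2 (x : X) : X := let: (a, b, c, d) := x in (- c, d, a, - b).
Definition mulE3 (x : X) : X := let: (a, b, c, d) := x in (- d, - c, b, a).

Definition qlmul (s : quat R) (x : X) : X :=
  q0 s *: x + q1 s *: mulE1 x + q2 s *: mulE2 x + q3 s *: mulE3 x.

Definition qpow (s : quat R) (m : nat) : X -> X := iter m (qlmul s).

Definition compw (A : V -> V) (x : X) : X :=
  let: (a, b, c, d) := x in (A a, A b, A c, A d).

Definition tcomp (T : qop V) (i : 'I_4) : V -> V :=
  match val i with 0 => op0 T | 1 => op1 T | 2 => op2 T | _ => op3 T end%N.

Definition Top (T : qop V) (x : X) : X :=
  compw (op0 T) x + mulE1 (compw (op1 T) x) + mulE2 (compw (op2 T) x)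
  + mulE3 (compw (op3 T) x).

Definition Tbar (T : qop V) (x : X) : X :=
  compw (op0 T) x - mulE1 (compw (op1 T) x) - mulE2 (compw (op2 T) x)
  - mulE3 (compw (op3 T) x).

Definition BC (T : qop V) : Prop :=
  (forall i, continuous (tcomp T i)) /\
  (forall i j, tcomp T i \o tcomp T j =1 tcomp T j \o tcomp T i).

Definition Qcs (s : quat R) (T : qop V) (x : X) : X :=
  qpow s 2 x - qlmul s (Top T x + Tbar T x) + Top T (Tbar T x).

Definition rhoS (T : qop V) (s : quat R) : Prop :=
  exists Qi : X -> X, [/\ cancel (Qcs s T) Qi, cancel Qi (Qcs s T)
                        & continuous Qi].

Definition SL (Qi : X -> X) (s : quat R) (T : qop V) (x : X) : X :=
  qlmul s (Qi x) - Tbar T (Qi x).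
Definition SR (Qi : X -> X) (s : quat R) (T : qop V) (x : X) : X :=
  Qi (qlmul s x - Tbar T x).

Definition ML (Qi : X -> X) (s : quat R) (T : qop V) (m : nat) (x : X) : X :=
  \sum_(i < m) iter i (Tbar T) (SL Qi s T (qpow s (m - i.+1) x)).
Definition MR (Qi : X -> X) (s : quat R) (T : qop V) (m : nat) (x : X) : X :=
  \sum_(i < m) qpow s (m - i.+1) (SR Qi s T (iter i (Tbar T) x)).

End QuaternionicOperators.

(* Main.v *)
Require Import Defs.
From HB Require Import structures.
From mathcomp Require Import all_boot all_order all_algebra.
From mathcomp Require Import all_classical all_reals topology normedtype.
Import Order.TTheory GRing.Theory Num.Theory.
Local Open Scope ring_scope.

Inductive zexp := ZAtom of nat | ZAdd of zexp & zexp | ZOpp of zexp | ZZero.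

Fixpoint zcoef (e : zexp) (k : nat) : int :=
  match e with
  | ZAtom i => ((i == k)%N : nat)%:Z
  | ZAdd a b => zcoef a k + zcoef b k
  | ZOpp a => - zcoef a k
  | ZZero => 0
  end.

Section ZS.
Variable V : zmodType.
Fixpoint zeval (env : seq V) (e : zexp) : V :=
  match e with
  | ZAtom i => nth 0 env i
  | ZAdd a b => zeval env a + zeval env b
  | ZOpp a => - zeval env a
  | ZZero => 0
  end.

Lemma zevalE env e : zeval env e = \sum_(k < size env) nth 0 env k *~ zcoef e k.
Proof.
elim: e => [i|a iha b ihb|a iha|] /=.
- case: (ltnP i (size env)) => hi.
    rewrite (bigD1 (Ordinal hi)) //= eqxx mulr1z big1 ?addr0 // => k hk.
    have -> : (i == k)%N = false.
      by apply/negP => /eqP e; move: hk; rewrite -val_eqE /= e eqxx.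
    by rewrite mulr0z.
  rewrite nth_default // big1 // => k _.
  have -> : (i == k)%N = false.
    by apply/negP => /eqP e; move: (ltn_ord k); rewrite -e ltnNge hi.
  by rewrite mulr0z.
- by rewrite iha ihb -big_split /=; apply: eq_bigr => k _; rewrite mulrzDr.
- by rewrite iha -sumrN; apply: eq_bigr => k _; rewrite mulrNz.
- by rewrite big1 // => k _; rewrite mulr0z.
Qed.

Lemma zsound env e1 e2 :
  all (fun k => zcoef e1 k == zcoef e2 k) (iota 0 (size env)) ->
  zeval env e1 = zeval env e2.
Proof.
move/allP=> h; rewrite !zevalE; apply: eq_bigr => k _.
by rewrite (eqP (h k _)) // mem_iota /= add0n ltn_ord.
Qed.
End ZS.

Ltac zconv t u := constr:(ltac:(unify t u; exact I) : True).

Ltac zmem t l :=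
  match l with
  | cons ?u ?l' =>
      match constr:(tt) with
      | _ => let _ := zconv t u in constr:(true)
      | _ => zmem t l'
      end
  | _ => constr:(false)
  end.

Ltac zcollect t acc :=
  lazymatch t with
  | ?a + ?b => let acc := zcollect a acc in zcollect b acc
  | - ?a => zcollect a acc
  | 0 => acc
  | _ => let b := zmem t acc in
         lazymatch b with
         | true => acc
         | false => constr:(cons t acc)
         end
  end.

Ltac zidx t l :=
  match l with
  | cons ?u ?l' =>
      match constr:(tt) with
      | _ => let _ := zconv t u in constr:(0%N)
      | _ => let n := zidx t l' in constr:(S n)
      end
  end.

Ltac zreify t env :=
  lazymatch t with
  | ?a + ?b => let ra := zreify a env in let rb := zreify b env in constr:(ZAdd ra rb)
  | - ?a => let ra := zreify a env in constr:(ZOpp ra)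
  | 0 => constr:(ZZero)
  | _ => let i := zidx t env in constr:(ZAtom i)
  end.

Ltac zsolve :=
  lazymatch goal with
  | |- @eq ?T ?l ?r =>
    let env := zcollect l (@nil T) in
    let env := zcollect r env in
    let el := zreify l env in
    let er := zreify r env in
    change (@zeval _ env el = @zeval _ env er);
    apply: zsound; vm_compute; reflexivity
  end.
Section Q.
Variables (R : realType) (V : normedModType R).
Implicit Types (x y : X V) (a b c d : V) (r : R).

Lemma pairD a b c d a' b' c' d' :
  ((a,b,c,d) + (a',b',c',d') : X V) = (a+a',b+b',c+c',d+d').
Proof. reflexivity. Qed.
Lemma pairN a b c d : (- (a,b,c,d) : X V) = (-a,-b,-c,-d).
Proof. reflexivity. Qed.
Lemma pairZ r a b c d : (r *: (a,b,c,d) : X V) = (r*:a,r*:b,r*:c,r*:d).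
Proof. reflexivity. Qed.

Ltac xs := do 6 (rewrite ?pairD ?pairN ?pairZ; cbv beta iota zeta delta [fst snd]).
Ltac xd x := case: x => [[[? ?] ?] ?].
Ltac ctac := rewrite /mulE1 /mulE2 /mulE3 /compw; xs; congr (_,_,_,_).

Lemma E1D x y : mulE1 (x + y) = mulE1 x + mulE1 y.
Proof. xd x; xd y; ctac; zsolve. Qed.
Lemma E2D x y : mulE2 (x + y) = mulE2 x + mulE2 y.
Proof. xd x; xd y; ctac; zsolve. Qed.
Lemma E3D x y : mulE3 (x + y) = mulE3 x + mulE3 y.
Proof. xd x; xd y; ctac; zsolve. Qed.
Lemma E1N x : mulE1 (- x) = - mulE1 x.
Proof. xd x; ctac; zsolve. Qed.
Lemma E2N x : mulE2 (- x) = - mulE2 x.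
Proof. xd x; ctac; zsolve. Qed.
Lemma E3N x : mulE3 (- x) = - mulE3 x.
Proof. xd x; ctac; zsolve. Qed.
Lemma E1Z r x : mulE1 (r *: x) = r *: mulE1 x.
Proof. by xd x; ctac; rewrite ?scalerN. Qed.
Lemma E2Z r x : mulE2 (r *: x) = r *: mulE2 x.
Proof. by xd x; ctac; rewrite ?scalerN. Qed.
Lemma E3Z r x : mulE3 (r *: x) = r *: mulE3 x.
Proof. by xd x; ctac; rewrite ?scalerN. Qed.

Section A.
Variable A : V -> V.
Hypothesis hAD : forall u v, A (u + v) = A u + A v.
Hypothesis hAZ : forall r u, A (r *: u) = r *: A u.
Lemma hAN u : A (- u) = - A u.
Proof. by rewrite -scaleN1r hAZ scaleN1r. Qed.

Lemma CD x y : compw A (x + y) = compw A x + compw A y.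
Proof. by xd x; xd y; ctac; rewrite hAD. Qed.
Lemma CN x : compw A (- x) = - compw A x.
Proof. by xd x; ctac; rewrite hAN. Qed.
Lemma CZ r x : compw A (r *: x) = r *: compw A x.
Proof. by xd x; ctac; rewrite hAZ. Qed.
Lemma CE1 x : compw A (mulE1 x) = mulE1 (compw A x).
Proof. by xd x; ctac; rewrite hAN. Qed.
Lemma CE2 x : compw A (mulE2 x) = mulE2 (compw A x).
Proof. by xd x; ctac; rewrite hAN. Qed.
Lemma CE3 x : compw A (mulE3 x) = mulE3 (compw A x).
Proof. by xd x; ctac; rewrite hAN. Qed.
Lemma SC (s : quat R) x : qlmul s (compw A x) = compw A (qlmul s x).
Proof. by rewrite /qlmul !CD !CZ CE1 CE2 CE3. Qed.
End A.

Lemma SD (s : quat R) x y : qlmul s (x + y) = qlmul s x + qlmul s y.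
Proof.
rewrite /qlmul E1D E2D E3D !scalerDr.
set u1 := _ *: x; set u2 := _ *: y; set u3 := _ *: mulE1 x; set u4 := _ *: mulE1 y.
set u5 := _ *: mulE2 x; set u6 := _ *: mulE2 y; set u7 := _ *: mulE3 x; set u8 := _ *: mulE3 y.
zsolve.
Qed.
Lemma SN (s : quat R) x : qlmul s (- x) = - qlmul s x.
Proof. rewrite /qlmul E1N E2N E3N !scalerN. zsolve. Qed.

Section T.
Variable T : qop V.
Lemma C0D x y : compw (op0 T) (x + y) = compw (op0 T) x + compw (op0 T) y.
Proof. by apply: CD => *; rewrite ?raddfD ?linearZ. Qed.
Lemma C1D x y : compw (op1 T) (x + y) = compw (op1 T) x + compw (op1 T) y.
Proof. by apply: CD => *; rewrite ?raddfD ?linearZ. Qed.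
Lemma C2D x y : compw (op2 T) (x + y) = compw (op2 T) x + compw (op2 T) y.
Proof. by apply: CD => *; rewrite ?raddfD ?linearZ. Qed.
Lemma C3D x y : compw (op3 T) (x + y) = compw (op3 T) x + compw (op3 T) y.
Proof. by apply: CD => *; rewrite ?raddfD ?linearZ. Qed.
Lemma C0N x : compw (op0 T) (- x) = - compw (op0 T) x.
Proof. by apply: CN => *; rewrite ?raddfD ?linearZ. Qed.
Lemma C1N x : compw (op1 T) (- x) = - compw (op1 T) x.
Proof. by apply: CN => *; rewrite ?raddfD ?linearZ. Qed.
Lemma C2N x : compw (op2 T) (- x) = - compw (op2 T) x.
Proof. by apply: CN => *; rewrite ?raddfD ?linearZ. Qed.
Lemma C3N x : compw (op3 T) (- x) = - compw (op3 T) x.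
Proof. by apply: CN => *; rewrite ?raddfD ?linearZ. Qed.

Lemma o0D (u v : V) : op0 T (u + v) = op0 T u + op0 T v. Proof. exact: raddfD. Qed.
Lemma o0N (u : V) : op0 T (- u) = - op0 T u. Proof. exact: raddfN. Qed.
Lemma o1D (u v : V) : op1 T (u + v) = op1 T u + op1 T v. Proof. exact: raddfD. Qed.
Lemma o1N (u : V) : op1 T (- u) = - op1 T u. Proof. exact: raddfN. Qed.
Lemma o2D (u v : V) : op2 T (u + v) = op2 T u + op2 T v. Proof. exact: raddfD. Qed.
Lemma o2N (u : V) : op2 T (- u) = - op2 T u. Proof. exact: raddfN. Qed.
Lemma o3D (u v : V) : op3 T (u + v) = op3 T u + op3 T v. Proof. exact: raddfD. Qed.
Lemma o3N (u : V) : op3 T (- u) = - op3 T u. Proof. exact: raddfN. Qed.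
Lemma TopD x y : Top T (x + y) = Top T x + Top T y.
Proof. rewrite /Top C0D C1D C2D C3D E1D E2D E3D; zsolve. Qed.
Lemma TbarD x y : Tbar T (x + y) = Tbar T x + Tbar T y.
Proof. rewrite /Tbar C0D C1D C2D C3D E1D E2D E3D; zsolve. Qed.
Lemma TopN x : Top T (- x) = - Top T x.
Proof. rewrite /Top C0N C1N C2N C3N E1N E2N E3N; zsolve. Qed.
Lemma TbarN x : Tbar T (- x) = - Tbar T x.
Proof. rewrite /Tbar C0N C1N C2N C3N E1N E2N E3N; zsolve. Qed.

Lemma TopTbar x : Top T x + Tbar T x = compw (op0 T) x + compw (op0 T) x.
Proof. rewrite /Top /Tbar; zsolve. Qed.

Definition Bop (v : V) : V := op0 T (op0 T v) + op1 T (op1 T v) + op2 T (op2 T v) + op3 T (op3 T v).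
Lemma BD u v : Bop (u + v) = Bop u + Bop v.
Proof. rewrite /Bop !raddfD; zsolve. Qed.
Lemma BZ r u : Bop (r *: u) = r *: Bop u.
Proof. by rewrite /Bop !linearZ !scalerDr. Qed.

Hypothesis hT : BC T.
Lemma TT x : Top T (Tbar T x) = compw Bop x.
Proof.
have c := hT.2.
have c01 : forall v, op0 T (op1 T v) = op1 T (op0 T v) := fun v => c (@Ordinal 4 0 isT) (@Ordinal 4 1 isT) v.
have c02 : forall v, op0 T (op2 T v) = op2 T (op0 T v) := fun v => c (@Ordinal 4 0 isT) (@Ordinal 4 2 isT) v.
have c03 : forall v, op0 T (op3 T v) = op3 T (op0 T v) := fun v => c (@Ordinal 4 0 isT) (@Ordinal 4 3 isT) v.
have c12 : forall v, op1 T (op2 T v) = op2 T (op1 T v) := fun v => c (@Ordinal 4 1 isT) (@Ordinal 4 2 isT) v.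
have c13 : forall v, op1 T (op3 T v) = op3 T (op1 T v) := fun v => c (@Ordinal 4 1 isT) (@Ordinal 4 3 isT) v.
have c23 : forall v, op2 T (op3 T v) = op3 T (op2 T v) := fun v => c (@Ordinal 4 2 isT) (@Ordinal 4 3 isT) v.
xd x; rewrite /Top /Tbar /Bop.
ctac.
all: rewrite ?o0D ?o1D ?o2D ?o3D ?o0N ?o1N ?o2N ?o3N.

all: rewrite ?c01 ?c02 ?c03 ?c12 ?c13 ?c23.
all: zsolve.
Qed.
Lemma SC0 (s : quat R) x : qlmul s (compw (op0 T) x) = compw (op0 T) (qlmul s x).
Proof. by apply: SC => *; rewrite ?raddfD ?linearZ. Qed.
Lemma SCB (s : quat R) x : qlmul s (compw Bop x) = compw Bop (qlmul s x).
Proof. by apply: SC => *; rewrite ?BD ?BZ. Qed.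

Variable s : quat R.
Lemma CBD x y : compw Bop (x + y) = compw Bop x + compw Bop y.
Proof. by apply: CD => *; rewrite ?BD ?BZ. Qed.
Lemma CBN x : compw Bop (- x) = - compw Bop x.
Proof. by apply: CN => *; rewrite ?BD ?BZ. Qed.
Lemma qp2 y : qpow s 2 y = qlmul s (qlmul s y). Proof. by []. Qed.

Lemma QS x : qlmul s (Qcs s T x) = Qcs s T (qlmul s x).
Proof.
rewrite /Qcs !qp2 !TopTbar !TT //.
rewrite (SD s (qlmul s (qlmul s x) - qlmul s (compw (op0 T) x + compw (op0 T) x)) (compw Bop x)).
rewrite (SD s (qlmul s (qlmul s x)) (- qlmul s (compw (op0 T) x + compw (op0 T) x))).
rewrite (SN s (qlmul s (compw (op0 T) x + compw (op0 T) x))).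
by rewrite (SD s (compw (op0 T) x) (compw (op0 T) x)) (SC0 s x) (SCB s x).
Qed.

Lemma QD x y : Qcs s T (x + y) = Qcs s T x + Qcs s T y.
Proof.
rewrite /Qcs !qp2 !TopTbar !TT // C0D CBD (SD s x y) (SD s (qlmul s x) (qlmul s y)).
rewrite (SD s (compw (op0 T) x + compw (op0 T) y) (compw (op0 T) x + compw (op0 T) y)).
rewrite (SD s (compw (op0 T) x) (compw (op0 T) y)).
rewrite (SD s (compw (op0 T) x) (compw (op0 T) x)) (SD s (compw (op0 T) y) (compw (op0 T) y)).
zsolve.
Qed.
Lemma QN x : Qcs s T (- x) = - Qcs s T x.
Proof.
rewrite /Qcs !qp2 !TopTbar !TT // C0N CBN (SN s x) (SN s (qlmul s x)).
rewrite (SD s (- compw (op0 T) x) (- compw (op0 T) x)) (SN s (compw (op0 T) x)).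
rewrite (SD s (compw (op0 T) x) (compw (op0 T) x)).
zsolve.
Qed.

Lemma qpowD n x y : qpow s n (x + y) = qpow s n x + qpow s n y.
Proof. by elim: n => //= n ih; rewrite ih; exact: SD. Qed.
Lemma qpowN n x : qpow s n (- x) = - qpow s n x.
Proof. by elim: n => //= n ih; rewrite ih; exact: SN. Qed.
Lemma itD n x y : iter n (Tbar T) (x + y) = iter n (Tbar T) x + iter n (Tbar T) y.
Proof. by elim: n => //= n ih; rewrite ih; exact: TbarD. Qed.
Lemma itN n x : iter n (Tbar T) (- x) = - iter n (Tbar T) x.
Proof. by elim: n => //= n ih; rewrite ih; exact: TbarN. Qed.

Variable Qi : X V -> X V.
Hypotheses (hQ1 : cancel (Qcs s T) Qi) (hQ2 : cancel Qi (Qcs s T)).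
Lemma QiD x y : Qi (x + y) = Qi x + Qi y.
Proof.
have -> : x + y = Qcs s T (Qi x) + Qcs s T (Qi y) by rewrite !hQ2.
by rewrite -QD hQ1.
Qed.
Lemma QiN x : Qi (- x) = - Qi x.
Proof.
have -> : - x = - Qcs s T (Qi x) by rewrite !hQ2.
by rewrite -QN hQ1.
Qed.
Lemma QiS x : Qi (qlmul s x) = qlmul s (Qi x).
Proof.
have -> : qlmul s x = qlmul s (Qcs s T (Qi x)) by rewrite !hQ2.
by rewrite QS hQ1.
Qed.

Lemma tele (f : nat -> X V) m : \sum_(i < m) (f i - f i.+1) = f 0%N - f m.
Proof.
elim: m => [|m ih]; first by rewrite big_ord0 subrr.
by rewrite big_ord_recr /= ih; zsolve.
Qed.

Lemma mainL m x : Qi (qpow s m x) - iter m (Tbar T) (Qi x) = ML Qi s T m x.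
Proof.
rewrite /ML /SL.
rewrite (eq_bigr (fun i : 'I_m => iter i (Tbar T) (Qi (qpow s (m - i) x))
   - iter i.+1 (Tbar T) (Qi (qpow s (m - i.+1) x)))).
  by rewrite (tele (fun k => iter k (Tbar T) (Qi (qpow s (m - k) x)))) subn0 subnn.
move=> i _; rewrite itD itN -iterSr -QiS; congr (_ - _).
by rewrite /qpow -iterS subnSK.
Qed.

Lemma mainR m x : qpow s m (Qi x) - Qi (iter m (Tbar T) x) = MR Qi s T m x.
Proof.
rewrite /MR /SR.
rewrite (eq_bigr (fun i : 'I_m => qpow s (m - i) (Qi (iter i (Tbar T) x))
   - qpow s (m - i.+1) (Qi (iter i.+1 (Tbar T) x)))).
  by rewrite (tele (fun k => qpow s (m - k) (Qi (iter k (Tbar T) x)))) subn0 subnn.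
move=> i _; rewrite QiD QiN qpowD qpowN QiS -iterS; congr (_ - _).
by rewrite /qpow -iterSr subnSK.
Qed.
End T.
End Q.

Theorem theorem6p3 (R : realType) (V : completeNormedModType R)
    (T : qop V) (s : quat R) (hT : BC T) (hs : rhoS T s)
    (Qi : X V -> X V) (hQ1 : cancel (Qcs s T) Qi) (hQ2 : cancel Qi (Qcs s T))
    (m : nat) (hm : (1 <= m)%N) :
  (forall x : X V, Qi (qpow s m x) - iter m (Tbar T) (Qi x) = ML Qi s T m x) /\
  (forall x : X V, qpow s m (Qi x) - Qi (iter m (Tbar T) x) = MR Qi s T m x).
Proof.
split => x; [exact: mainL | exact: mainR].
Qed.
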